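(* Let $(w_k)_{k\ge0}$ and $(z_k)_{k\ge0}$ be sequences of real numbers, and let $J$ be the infinite matrix \[ J=\begin{bmatrix} w_0&z_0&&&&&\\ w_1&z_1&1&&&&\\ w_2&z_2&0&1&&&\\ w_3&z_3&0&0&1&&\\ w_4&z_4&0&0&0&1&\\ \vdots&\vdots&&&&&\ddots \end{bmatrix}, \] i.e. $J_{i,0}=w_i$, $J_{i,1}=z_i$ for $i\ge0$, $J_{i,i+1}=1$ for $i\ge1$, and all other entries are $0$. Then $J$ is totally positive if and only if both of the following hold: (1) $w_k=z_k=0$ for all $k\ge2$, and $w_0,w_1,z_0,z_1\ge0$; (2) $w_0z_1-w_1z_0\ge0$.
   Context: An infinite matrix is totally positive (TP) if all its minors (of all orders) are nonnegative. *)

(* Defs.v *)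
From mathcomp Require Import all_boot all_order all_algebra.
From mathcomp Require Import reals.
Set Implicit Arguments. Unset Strict Implicit. Unset Printing Implicit Defensive.
Import Order.TTheory GRing.Theory Num.Theory.
Local Open Scope ring_scope.

Definition infmx (R : Type) := nat -> nat -> R.

Definition strict_incr (k : nat) (s : 'I_k -> nat) : Prop :=
  forall i j : 'I_k, (i < j)%N -> (s i < s j)%N.

Definition minor (R : comPzRingType) (A : infmx R) (k : nat)
  (r c : 'I_k -> nat) : R := \det (\matrix_(i < k, j < k) A (r i) (c j)).

Definition totally_positive (R : realFieldType) (A : infmx R) : Prop :=
  forall (k : nat) (r c : 'I_k -> nat),
    strict_incr r -> strict_incr c -> 0 <= minor A r c.

Definition Jmx (R : realFieldType) (w z : nat -> R) : infmx R :=
  fun i j => if j == 0%N then w i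
             else if j == 1%N then z i
             else if (1 <= i)%N && (j == i.+1) then 1 else 0.

(* Main.v *)
Require Import Defs.
From mathcomp Require Import all_boot all_order all_algebra.
From mathcomp Require Import reals.
From mathcomp Require Import zify.
Import Order.TTheory GRing.Theory Num.Theory.
Local Open Scope ring_scope.

Lemma det2 (R : comPzRingType) (A : 'M[R]_2) :
  \det A = A 0 0 * A 1 1 - A 0 1 * A 1 0.
Proof.
rewrite (expand_det_row A 0) big_ord_recr /= big_ord_recr /= big_ord0 add0r.
rewrite /cofactor !det_mx11 !mxE /=.
have -> : widen_ord (m:=2) (leqnSn 1) ord_max = 0 by apply/val_inj.
have -> : lift (0 : 'I_2) 0 = 1 by apply/val_inj.
have -> : lift (ord_max : 'I_2) 0 = 0 by apply/val_inj.
have -> : (ord_max : 'I_2) = 1 by apply/val_inj.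
rewrite /= expr0 expr1 mul1r mulN1r.
by rewrite mulrN.
Qed.

Lemma strict_le_max k (s : 'I_k.+1 -> nat) : strict_incr s ->
  forall i, (s i <= s ord_max)%N.
Proof.
move=> hs i; have [->|ne] := eqVneq i ord_max; first by [].
apply: ltnW; apply: hs; have := ltn_ord i; move: ne.
rewrite -(inj_eq val_inj) /=; lia.
Qed.

Arguments strict_le_max [k s].
Lemma strict_lift k (s : 'I_k.+1 -> nat) : strict_incr s ->
  strict_incr (fun i : 'I_k => s (lift ord_max i)).
Proof. by move=> hs i j hij; apply: hs; rewrite !lift_max. Qed.

Arguments strict_lift [k s].
Section J.
Variables (R : realType) (w z : nat -> R).
Hypothesis hz : forall k : nat, (2 <= k)%N -> w k = 0 /\ z k = 0.

Lemma Jge2 i j : (2 <= j)%N -> Jmx w z i j = if (1 <= i)%N && (j == i.+1) then 1 else 0.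
Proof. by rewrite /Jmx; case: j => [|[|j]]. Qed.

Lemma Jrow i j : (2 <= i)%N -> Jmx w z i j = if j == i.+1 then 1 else 0.
Proof.
move=> hi; rewrite /Jmx; have [h1 h2] := hz _ hi.
case: j => [|[|j]] /=; rewrite ?h1 ?h2 //.
- by case: i hi {h1 h2} => [|[|i]].
- by case: i hi {h1 h2}.
Qed.

Lemma step k (r c : 'I_k.+1 -> nat) : strict_incr r -> strict_incr c ->
  (2 <= r ord_max)%N ->
  minor (Jmx w z) r c = if c ord_max == (r ord_max).+1 then
     minor (Jmx w z) (fun i : 'I_k => r (lift ord_max i)) (fun i : 'I_k => c (lift ord_max i))
     else 0.
Proof.
move=> hr hc h2; rewrite /minor.
set A := \matrix_(i, j) _.
have [e|ne] := eqVneq (c ord_max) (r ord_max).+1.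
  rewrite (expand_det_row A ord_max) (bigD1 ord_max) //= big1 ?addr0.
    rewrite /A mxE Jrow // e eqxx mul1r /cofactor exprD -exprMn mulrNN mulr1 expr1n mul1r.
    by congr (\det _); apply/matrixP => i j; rewrite !mxE.
  move=> j hj; rewrite /A mxE Jrow //.
  have : (c j < c ord_max)%N.
    apply: hc; have := ltn_ord j; move: hj; rewrite -(inj_eq val_inj) /=; lia.
  by rewrite e ltn_neqAle => /andP [/negPf -> _]; rewrite mul0r.
have [lt|gt] := ltnP (c ord_max) (r ord_max).+1.
  rewrite (expand_det_row A ord_max) big1 // => j _.
  rewrite /A mxE Jrow //.
  have := strict_le_max hc j => le.
  have -> : (c j == (r ord_max).+1) = false by apply/eqP; lia.
  by rewrite mul0r.
have gt2 : (c ord_max > (r ord_max).+1)%N.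
  by rewrite ltn_neqAle eq_sym ne.
rewrite (expand_det_col A ord_max) big1 // => i _.
rewrite /A mxE Jge2; last by lia.
have := strict_le_max hr i => le.
have -> : (c ord_max == (r i).+1) = false by apply/eqP; lia.
by rewrite andbF mul0r.
Qed.

Hypotheses (hw0 : 0 <= w 0%N) (hw1 : 0 <= w 1%N) (hz0 : 0 <= z 0%N) (hz1 : 0 <= z 1%N)
  (hdet : 0 <= w 0%N * z 1%N - w 1%N * z 0%N).

Lemma Jnonneg i j : 0 <= Jmx w z i j.
Proof.
have hwi : 0 <= w i.
  by case: i => [|[|i]] //; rewrite (proj1 (hz _ (isT : (2 <= i.+2)%N))).
have hzi : 0 <= z i.
  by case: i {hwi} => [|[|i]] //; rewrite (proj2 (hz _ (isT : (2 <= i.+2)%N))).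
rewrite /Jmx; case: ifP => // _; case: ifP => // _; case: ifP => // _.
Qed.

Lemma tp : totally_positive (Jmx w z).
Proof.
move=> k; elim: k => [|k IH] r c hr hc.
  by rewrite /minor det_mx00 ler01.
have [h2|h2] := leqP 2 (r ord_max).
  rewrite step //; case: ifP => // _.
  by apply: IH; apply: strict_lift.
case: k IH r c hr hc h2 => [|[|k]] IH r c hr hc h2.
- by rewrite /minor det_mx11 mxE; apply: Jnonneg.
- rewrite /minor det2 !mxE.
  have r01 : (r 0%R < r 1%R)%N by apply: hr.
  have c01 : (c 0%R < c 1%R)%N by apply: hc.
  have e1 : r 1%R = 1%N.
    have := strict_le_max hr 1%R; lia.
  have e0 : r 0%R = 0%N by lia.
  rewrite e0 e1.
  move: c01; case: (c 1%R) => [|[|[|b]]]; case: (c 0%R) => [|[|[|a]]] //= _;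
    rewrite /Jmx /=; rewrite ?mulr0 ?mul0r ?subr0 ?sub0r ?mul1r ?mulr1 //.
  by rewrite [z 0%N * _]mulrC.
- exfalso.
  have h1 : (r 0%R < r (inord 1))%N by apply: hr; rewrite inordK.
  have h3 : (r (inord 1) < r ord_max)%N by apply: hr; rewrite inordK.
  lia.
Qed.
End J.

Definition r1 (a : nat) : 'I_1 -> nat := fun _ => a.
Definition r2 (a b : nat) : 'I_2 -> nat := fun i => if val i == 0%N then a else b.

Lemma r1_strict a : strict_incr (r1 a).
Proof. by move=> [[|i] Hi] [[|j] Hj]. Qed.

Lemma r2_strict a b : (a < b)%N -> strict_incr (r2 a b).
Proof. by move=> hab [[|[|i]] Hi] [[|[|j]] Hj]. Qed.

Lemma minor1 (R : realType) (A : infmx R) a b : minor A (r1 a) (r1 b) = A a b.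
Proof. by rewrite /minor det_mx11 mxE. Qed.

Lemma minor2 (R : realType) (A : infmx R) a b c d :
  minor A (r2 a b) (r2 c d) = A a c * A b d - A a d * A b c.
Proof. by rewrite /minor det2 !mxE. Qed.

Theorem theorem3p4 (R : realType) (w z : nat -> R) :
  totally_positive (Jmx w z) <->
  ((forall k : nat, (2 <= k)%N -> w k = 0 /\ z k = 0) /\
     0 <= w 0%N /\ 0 <= w 1%N /\ 0 <= z 0%N /\ 0 <= z 1%N) /\
  0 <= w 0%N * z 1%N - w 1%N * z 0%N.
Proof.
split; last first.
  by move=> [[hz [? [? [? ?]]]] ?]; apply: tp.
move=> tp.
have e1 a b : 0 <= Jmx w z a b.
  by rewrite -minor1; apply: tp; apply: r1_strict.
have e2 a b c d : (a < b)%N -> (c < d)%N ->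
   0 <= Jmx w z a c * Jmx w z b d - Jmx w z a d * Jmx w z b c.
  by move=> hab hcd; rewrite -minor2; apply: tp; apply: r2_strict.
split; last first.
  by have := e2 0%N 1%N 0%N 1%N isT isT; rewrite /Jmx /= mulrC [z 0%N * _]mulrC.
split; last by rewrite /=; have := e1 0%N 0%N; have := e1 1%N 0%N;
  have := e1 0%N 1%N; have := e1 1%N 1%N; rewrite /Jmx /=.
case=> [|[|k]] // _.
have hw := e2 k.+1 k.+2 0%N k.+2 (ltnSn _) isT.
have hz := e2 k.+1 k.+2 1%N k.+2 (ltnSn _) isT.
have hw' := e1 k.+2 0%N; have hz' := e1 k.+2 1%N.
move: hw hz hw' hz'; rewrite /Jmx /= eqxx.
have -> : (k.+2 == k.+3) = false by apply/eqP; lia.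
rewrite !mulr0 !mul1r !sub0r !oppr_ge0 => a b c d.
by split; apply/eqP; rewrite eq_le ?a ?b ?c ?d.
Qed.
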